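(* Let $q>0$. If $L(q)$ contains a loop of odd length, then $1/q$ is an algebraic integer.
   Context: Let $q>0$. For an integer $k\ge0$ and $\mathbf m=(m_0,\dots,m_k)\in\mathbb Z^{k+1}$ put $\mathbf m_j=(m_0,\dots,m_j)$. Define $c(q,\mathbf m_0)=m_0$ and recursively $c(q,\mathbf m_j)=m_j+\frac{1}{q\,c(q,\mathbf m_{j-1})}$ for $1\le j\le k$. The vector $\mathbf m$ is a path for $q$ of length $k$ if $c(q,\mathbf m_j)\ne0$ for $0\le j\le k-1$. A loop is a path $\mathbf m$ with $c(q,\mathbf m)=0$, and $L(q)$ denotes the set of loops for $q$. *)

(* Defs.v *)
From mathcomp Require Import all_boot all_order all_algebra.
From mathcomp Require Import reals.
Set Implicit Arguments. Unset Strict Implicit. Unset Printing Implicit Defensive.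
Import Order.TTheory GRing.Theory Num.Theory.
Local Open Scope ring_scope.

(* A vector m = (m_0,...,m_k) in Z^(k+1) is represented by a function
   m : nat -> int (only the values m 0, ..., m k matter).
   cf q m j = c(q, m_j):  c(q,m_0) = m_0,
   c(q,m_j) = m_j + 1/(q c(q,m_{j-1})). *)
Fixpoint cf (R : realType) (q : R) (m : nat -> int) (j : nat) : R :=
  match j with
  | 0 => (m 0%N)%:~R
  | j'.+1 => (m j)%:~R + (q * cf q m j')^-1
  end.

Definition is_path (R : realType) (q : R) (k : nat) (m : nat -> int) : Prop :=
  forall j : nat, (j < k)%N -> cf q m j != 0.

(* m is a loop for q of length k, i.e. (k, m) represents an element of L(q) *)
Definition is_loop (R : realType) (q : R) (k : nat) (m : nat -> int) : Prop :=
  is_path q k m /\ cf q m k = 0.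

Definition algebraic_integer (R : realType) (x : R) : Prop :=
  integralOver (fun z : int => z%:~R : R) x.

(* Main.v *)
Require Import Defs.
From mathcomp Require Import all_boot all_order all_algebra.
From mathcomp Require Import reals.
Local Open Scope ring_scope.
Import Order.TTheory GRing.Theory Num.Theory.

Fixpoint QP (m : nat -> int) (n : nat) : {poly int} :=
  match n with
  | 0 => 1
  | 1 => (m 0%N)%:P
  | (S n' as n1).+1 => (m n1)%:P * QP m n1 + 'X * QP m n'
  end.

Lemma QP_size (m : nat -> int) (n : nat) :
  (QP m n.*2 \is monic) && (size (QP m n.*2) == n.+1) &&
  (size (QP m n.*2.+1) <= n.+1)%N.
Proof.
elim: n => [|n IH].
  by rewrite /= monic1 size_poly1 size_polyC leq_b1.
move: IH => /andP[/andP[Hm /eqP Hs] Hs1].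
have HX : forall p : {poly int}, p \is monic -> size ('X * p) = (size p).+1.
  move=> p Hp; rewrite size_monicM ?monicX ?monic_neq0 //.
  by rewrite size_polyX.
have HC : forall (c : int) (p : {poly int}), (size (c%:P * p)%R <= size p)%N.
  by move=> c p; rewrite mul_polyC; apply: size_scale_leq.
have E2 : QP m (n.+1).*2 = (m (n.*2.+1))%:P * QP m n.*2.+1 + 'X * QP m n.*2.
  by rewrite doubleS.
have Hlt : (size ((m (n.*2.+1))%:P * QP m n.*2.+1)%R < size ('X * QP m n.*2)%R)%N.
  by rewrite HX // Hs ltnS; apply: leq_trans (HC _ _) Hs1.
have Hm2 : QP m (n.+1).*2 \is monic.
  rewrite E2 monicE lead_coefDr // mulrC lead_coefMX.
  by move: Hm; rewrite monicE.
have Hs2 : size (QP m (n.+1).*2) = n.+2.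
  by rewrite E2 addrC size_polyDl // HX // Hs.
have E3 : QP m (n.+1).*2.+1 = (m ((n.+1).*2))%:P * QP m (n.+1).*2 + 'X * QP m n.*2.+1.
  by rewrite doubleS.
rewrite Hm2 Hs2 eqxx !andTb E3; apply: leq_trans (size_polyD _ _) _.
rewrite geq_max; apply/andP; split.
  by apply: leq_trans (HC _ _) _; rewrite Hs2.
apply: leq_trans (size_mul_leq _ _) _.
by rewrite size_polyX /= ltnS.
Qed.

Section Eval.
Variables (R : realType) (q : R) (m : nat -> int).
Definition EE (n : nat) : R :=
  (map_poly (fun z : int => z%:~R : R) (QP m n)).[q^-1].

Lemma EE0 : EE 0 = 1.
Proof. by rewrite /EE /= rmorph1 hornerC. Qed.
Lemma EE1 : EE 1 = (m 0%N)%:~R.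
Proof. by rewrite /EE /= map_polyC hornerC. Qed.
Lemma EESS n : EE n.+2 = (m n.+1)%:~R * EE n.+1 + q^-1 * EE n.
Proof.
rewrite /EE [QP m n.+2]/= rmorphD !rmorphM /= map_polyC map_polyX.
by rewrite hornerD !hornerM hornerC hornerX [q^-1 * _]mulrC.
Qed.
End Eval.
Arguments EE {R} q m n.
Arguments EESS {R} q m n.
Lemma EE_cf (R : realType) (q : R) (m : nat -> int) (k : nat) :
  0 < q -> is_path q k m ->
  forall j, (j <= k)%N -> EE q m j != 0 /\ EE q m j.+1 = cf q m j * EE q m j.
Proof.
move=> hq hp; elim=> [|j IH] hj.
  by rewrite EE0 EE1 oner_eq0 mulr1.
have [Hn He] := IH (ltnW hj).
have cj : cf q m j != 0 by apply: hp.
have Hn' : EE q m j.+1 != 0 by rewrite He mulf_neq0.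
split=> //.
rewrite EESS He /= mulrDl; congr (_ + _).
rewrite invfM -mulrA mulKf //.
Qed.

Theorem corollary2 (R : realType) (q : R) (hq : 0 < q) :
  (exists (k : nat) (m : nat -> int), odd k /\ is_loop q k m) ->
  algebraic_integer q^-1.
Proof.
move=> [k [m [hk [hp hc]]]].
have [_ He] := @EE_cf R q m k hq hp k (leqnn k).
have Hk : k.+1 = (k.+1)./2.*2 by rewrite -[LHS]odd_double_half /= hk.
have := QP_size m (k.+1)./2 => /andP[/andP[Hm _] _].
exists (QP m (k.+1)./2.*2) => //.
by rewrite /root -Hk -/(EE q m k.+1) He hc mul0r.
Qed.
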